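(* Let $B\ge 0$, $E>0$ and $L>0$ be constants, and on the domain $\{(r,\theta)\,:\, r>1,\ 0<\theta<\pi\}$ define $$U(r,\theta)=\frac{L^2\Lambda^2}{2r^2\sin^2\theta}-\frac{E^2}{2\Lambda^2\Gamma},\qquad \Lambda=1+\frac{B^2}{4}r^2\sin^2\theta,\qquad \Gamma=1-\frac1r .$$ If $(r_c,\theta_c)$ is a critical point of $U$ in this domain, i.e. $\partial U/\partial r=\partial U/\partial\theta=0$ at $(r_c,\theta_c)$, then $\theta_c=\pi/2$. Consequently every fixed point of the Hamiltonian system with Hamiltonian $$H=\frac{\Gamma}{2\Lambda^2}p_r^2+\frac{p_\theta^2}{2r^2\Lambda^2}+U(r,\theta)$$ on $\{(p_r,p_\theta,r,\theta): r>1,\ 0<\theta<\pi\}$ has $p_r=p_\theta=0$ and $\theta=\pi/2$ (it corresponds to a circular orbit in the equatorial plane).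
   Context: This is the reduced (after elimination of the cyclic coordinates $t,\varphi$) Hamiltonian system for time-like geodesics of neutral particles in the Schwarzschild–Melvin spacetime, in dimensionless units where the horizon is $r=1$; $E$ is the energy, $L$ the angular momentum about the symmetry axis, and $B$ the dimensionless magnetic field parameter. The canonical variables are $(p_r,p_\theta,r,\theta)$ with $\dot r=\partial H/\partial p_r$, $\dot\theta=\partial H/\partial p_\theta$, $\dot p_r=-\partial H/\partial r$, $\dot p_\theta=-\partial H/\partial\theta$. *)

(* Defs.v *)
From Stdlib Require Import Reals.
From Coquelicot Require Import Coquelicot.
Open Scope R_scope.

Definition Lam (B r th : R) : R := 1 + B ^ 2 / 4 * r ^ 2 * (sin th) ^ 2.

Definition Gam (r : R) : R := 1 - 1 / r.

Definition Upot (B E L r th : R) : R :=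
  L ^ 2 * (Lam B r th) ^ 2 / (2 * r ^ 2 * (sin th) ^ 2)
  - E ^ 2 / (2 * (Lam B r th) ^ 2 * Gam r).

Definition Ham (B E L pr pth r th : R) : R :=
  Gam r / (2 * (Lam B r th) ^ 2) * pr ^ 2
  + pth ^ 2 / (2 * r ^ 2 * (Lam B r th) ^ 2)
  + Upot B E L r th.

Definition in_domain (r th : R) : Prop := 1 < r /\ 0 < th < PI.

Definition critical_point_U (B E L rc thc : R) : Prop :=
  is_derive (fun r => Upot B E L r thc) rc 0 /\
  is_derive (fun th => Upot B E L rc th) thc 0.

(* Fixed point of the Hamiltonian flow:
   rdot = dH/dp_r = 0, thetadot = dH/dp_theta = 0,
   p_r dot = -dH/dr = 0, p_theta dot = -dH/dtheta = 0. *)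
Definition fixed_point_H (B E L pr pth r th : R) : Prop :=
  is_derive (fun x => Ham B E L x pth r th) pr 0 /\
  is_derive (fun x => Ham B E L pr x r th) pth 0 /\
  is_derive (fun x => Ham B E L pr pth x th) r 0 /\
  is_derive (fun x => Ham B E L pr pth r x) th 0.

(* Main.v *)
Require Import Defs.
From Stdlib Require Import Reals Lra.
From Coquelicot Require Import Coquelicot.
Open Scope R_scope.

Lemma dUr B E L r th : 1 < r -> 0 < sin th ->
  is_derive (fun x => Upot B E L x th) r
   (L^2 * Lam B r th * (B^2/4*r^2*(sin th)^2 - 1) / ((sin th)^2 * r^3)
    + E^2 * (4 * (B^2/4*r^2*(sin th)^2) * Gam r / r + Lam B r th / r^2)
       / (2 * (Lam B r th)^3 * (Gam r)^2)).
Proof.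
intros hr hs.
assert (hL : 0 < Lam B r th). { unfold Lam. assert (0 <= B^2/4*r^2*sin th^2). { apply Rmult_le_pos. apply Rmult_le_pos. apply Rmult_le_pos. apply pow2_ge_0. lra. apply pow2_ge_0. apply pow2_ge_0. } lra. }
assert (hG : 0 < Gam r). { unfold Gam. assert (1/r < 1). { apply (Rmult_lt_reg_r r); try lra. field_simplify; lra. } lra. }
unfold Upot. unfold Lam, Gam in *.
auto_derive.
{ repeat split; repeat apply Rmult_integral_contrapositive_currified; simpl in *; try lra. }
field. repeat split; simpl in *; try lra.
Qed.

Lemma dUth B E L r th : 1 < r -> 0 < sin th ->
  is_derive (fun x => Upot B E L r x) th
   (2 * sin th * cos th *
    (L^2 * Lam B r th * (B^2/4*r^2*(sin th)^2 - 1) / (2 * r^2 * (sin th)^4)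
    + E^2 * (B^2/4*r^2) / (Gam r * (Lam B r th)^3))).
Proof.
intros hr hs.
assert (hL : 0 < Lam B r th). { unfold Lam. assert (0 <= B^2/4*r^2*sin th^2). { apply Rmult_le_pos. apply Rmult_le_pos. apply Rmult_le_pos. apply pow2_ge_0. lra. apply pow2_ge_0. apply pow2_ge_0. } lra. }
assert (hG : 0 < Gam r). { unfold Gam. assert (1/r < 1). { apply (Rmult_lt_reg_r r); try lra. field_simplify; lra. } lra. }
unfold Upot. unfold Lam, Gam in *.
auto_derive.
{ repeat split; repeat apply Rmult_integral_contrapositive_currified; simpl in *; try lra. }
field. repeat split; simpl in *; try lra.
Qed.

Lemma key B E L r s G : 1 < r -> 0 < s -> 0 < G -> 0 < E ->
  let La := 1 + B^2/4*r^2*s^2 in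
  L^2 * La * (B^2/4*r^2*s^2 - 1) / (s^2 * r^3)
    + E^2 * (4 * (B^2/4*r^2*s^2) * G / r + La / r^2)
       / (2 * La^3 * G^2) = 0 ->
  L^2 * La * (B^2/4*r^2*s^2 - 1) / (2 * r^2 * s^4)
    + E^2 * (B^2/4*r^2) / (G * La^3) = 0 -> False.
Proof.
intros hr hs hG hE La h1 h2.
assert (hL : 0 < La). { unfold La. assert (0 <= B^2/4*r^2*s^2). { apply Rmult_le_pos. apply Rmult_le_pos. apply Rmult_le_pos. apply pow2_ge_0. lra. apply pow2_ge_0. apply pow2_ge_0. } lra. }
assert (hid : L^2 * La * (B^2/4*r^2*s^2 - 1) / (s^2 * r^3)
    + E^2 * (4 * (B^2/4*r^2*s^2) * G / r + La / r^2)
       / (2 * La^3 * G^2) - (2 * s^2 / r) * (L^2 * La * (B^2/4*r^2*s^2 - 1) / (2 * r^2 * s^4)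
    + E^2 * (B^2/4*r^2) / (G * La^3)) = E^2 / (2 * r^2 * G^2 * La^2)).
{ unfold La in *. field. repeat split; lra. }
rewrite h1, h2 in hid.
assert (0 < E^2 / (2 * r^2 * G^2 * La^2)).
{ apply Rdiv_lt_0_compat. nra. repeat apply Rmult_lt_0_compat; try lra; apply pow_lt; lra. }
lra.
Qed.

Lemma posLG B r th : 1 < r -> 0 < Lam B r th /\ 0 < Gam r.
Proof.
intros hr. split.
{ unfold Lam. assert (0 <= B^2/4*r^2*sin th^2). { apply Rmult_le_pos. apply Rmult_le_pos. apply Rmult_le_pos. apply pow2_ge_0. lra. apply pow2_ge_0. apply pow2_ge_0. } lra. }
{ unfold Gam. assert (1/r < 1). { apply (Rmult_lt_reg_r r); try lra. field_simplify; lra. } lra. }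
Qed.

Lemma dHpr B E L pr pth r th : 1 < r ->
  is_derive (fun x => Ham B E L x pth r th) pr (Gam r / (Lam B r th)^2 * pr).
Proof.
intros hr. destruct (posLG B r th hr) as [hL hG].
unfold Ham. auto_derive. { simpl in *. repeat apply Rmult_integral_contrapositive_currified; lra. }
field. simpl in *; lra.
Qed.

Lemma dHpth B E L pr pth r th : 1 < r ->
  is_derive (fun x => Ham B E L pr x r th) pth (pth / (r^2 * (Lam B r th)^2)).
Proof.
intros hr. destruct (posLG B r th hr) as [hL hG].
unfold Ham. auto_derive. { simpl in *. repeat apply Rmult_integral_contrapositive_currified; lra. }
field. simpl in *; lra.
Qed.

Lemma HamU B E L x y : Ham B E L 0 0 x y = Upot B E L x y.
Proof. unfold Ham. unfold Rdiv. ring. Qed.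

Lemma part1 (B E L : R) (hE : 0 < E) :
  (forall rc thc : R, in_domain rc thc ->
     critical_point_U B E L rc thc -> thc = PI / 2).
Proof.
intros rc thc [hr [h0 hpi]] [dr dth].
assert (hs : 0 < sin thc) by (apply sin_gt_0; lra).
destruct (posLG B rc thc hr) as [hL hG].
assert (e1 := is_derive_unique _ _ _ dr).
assert (e2 := is_derive_unique _ _ _ (dUr B E L rc thc hr hs)).
assert (e3 := is_derive_unique _ _ _ dth).
assert (e4 := is_derive_unique _ _ _ (dUth B E L rc thc hr hs)).
rewrite e1 in e2. rewrite e3 in e4.
destruct (Rtotal_order thc (PI/2)) as [hlt|[heq|hgt]]; [|exact heq|]; exfalso.
- assert (hc : 0 < cos thc) by (apply cos_gt_0; lra).
  apply (key B E L rc (sin thc) (Gam rc) hr hs hG hE).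
  + symmetry. exact e2.
  + assert (hb := e4). symmetry in hb. apply Rmult_integral in hb. destruct hb as [hb|hb].
    * exfalso. assert (0 < 2 * sin thc * cos thc) by (repeat apply Rmult_lt_0_compat; lra). lra.
    * exact hb.
- assert (hc : cos thc < 0) by (apply cos_lt_0; lra).
  apply (key B E L rc (sin thc) (Gam rc) hr hs hG hE).
  + symmetry. exact e2.
  + assert (hb := e4). symmetry in hb. apply Rmult_integral in hb. destruct hb as [hb|hb].
    * exfalso. assert (0 < 2 * sin thc * - cos thc) by (repeat apply Rmult_lt_0_compat; lra). lra.
    * exact hb.
Qed.

Theorem mainTheorem1 (B E L : R) (hB : 0 <= B) (hE : 0 < E) (hL : 0 < L) :
  (forall rc thc : R, in_domain rc thc ->
     critical_point_U B E L rc thc -> thc = PI / 2) /\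
  (forall pr pth r th : R, in_domain r th ->
     fixed_point_H B E L pr pth r th ->
     pr = 0 /\ pth = 0 /\ th = PI / 2).
Proof.
split. { apply part1; assumption. }
intros pr pth r th hd [d1 [d2 [d3 d4]]].
destruct hd as [hr hth].
destruct (posLG B r th hr) as [hLa hG].
assert (e1 := is_derive_unique _ _ _ d1).
assert (e2 := is_derive_unique _ _ _ (dHpr B E L pr pth r th hr)).
rewrite e1 in e2.
assert (hpr : pr = 0).
{ assert (0 < Gam r / Lam B r th ^ 2) by (apply Rdiv_lt_0_compat; [lra| apply pow_lt; lra]).
  symmetry in e2. apply Rmult_integral in e2. destruct e2; [lra|assumption]. }
assert (e3 := is_derive_unique _ _ _ d2).
assert (e4 := is_derive_unique _ _ _ (dHpth B E L pr pth r th hr)).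
rewrite e3 in e4.
assert (hpth : pth = 0).
{ assert (0 < r^2 * Lam B r th ^ 2) by (apply Rmult_lt_0_compat; apply pow_lt; lra).
  assert (pth = (pth / (r ^ 2 * Lam B r th ^ 2)) * (r ^ 2 * Lam B r th ^ 2)) by (field; lra).
  rewrite <- e4 in H0. lra. }
subst pr pth. split; [reflexivity|split; [reflexivity|]].
apply (part1 B E L hE r th); [split; assumption|split].
- apply (is_derive_ext (fun x => Ham B E L 0 0 x th)); [|exact d3].
  intros x. apply HamU.
- apply (is_derive_ext (fun x => Ham B E L 0 0 r x)); [|exact d4].
  intros x. apply HamU.
Qed.
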